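(* Let $k\ge2$ and let $n$ be a perfect square. Let $\{u,v\}$ be an edge of $G_k$ with $u,v\in H_2$. Then for any two $k$-cliques $K,K'$ of $G_k$ with $u\in K$ and $v\in K'$, we have $K\overset{*}{\leftrightarrow}K'$ in the subgraph of $G_k$ induced by $\mathcal{B}(\{u,v\},k-1)$; that is, there is a sequence of $k$-cliques $K=K_1,K_2,\dots,K_s=K'$, all contained in $\mathcal{B}(\{u,v\},k-1)$, such that $|K_i\cap K_{i+1}|\ge k-1$ for every $i\in[s-1]$.
   Context: $\mathcal{B}(U,T)$ is the set of nodes of $G_k$ at distance at most $T$ from $U$. Let $n$ be a perfect square. $G_2$ is the $(\sqrt n\times\sqrt n)$ simple grid (node set $\{(i,j):i,j\in[\sqrt n]\}$, $(i,j)\sim(i',j')$ iff $|i-i'|+|j-j'|=1$), and $H_2=V(G_2)$. For $k\ge2$, $G_{k+1}$ is obtained from $G_k$ by adding, for each node $u\in V(G_k)$, a new node $u^*$ (the duplicate of $u$) adjacent exactly to $u$ and to all neighbors of $u$ in $G_k$; $H_{k+1}$ is the set of these new nodes, so $V(G_k)=H_2\cup\dots\cup H_k$. *)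

(* Defs.v *)
From mathcomp Require Import all_boot.
Set Implicit Arguments. Unset Strict Implicit. Unset Printing Implicit Defensive.

(* The grid has side m; n = m * m. A grid point is a pair of ordinals. *)
Definition gpt (m : nat) := ('I_m * 'I_m)%type.

Definition gridadj (m : nat) (p q : gpt m) : bool :=
  ((p.1 == q.1 :> nat) && ((p.2.+1 == q.2 :> nat) || (q.2.+1 == p.2 :> nat))) ||
  ((p.2 == q.2 :> nat) && ((p.1.+1 == q.1 :> nat) || (q.1.+1 == p.1 :> nat))).

(* A node of G_k is encoded as (p, s) with p a grid point and s a list of k-2
   booleans; the head of s records the last duplication step: a node of
   G_(k+1) is (p, false :: s) (the old node (p,s) of G_k) or (p, true :: s)
   (the duplicate (p,s)^* of the node (p,s) of G_k).  H_2 = nodes with s all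
   false; H_(j+1) = nodes whose s has a true at position k-1-j (from the head). *)
Fixpoint adjs (m : nat) (p q : gpt m) (s t : seq bool) : bool :=
  match s, t with
  | [::], [::] => gridadj p q
  | b :: s', c :: t' =>
      if b then
        (if c then false else ((p == q) && (s' == t')) || adjs p q s' t')
      else
        (if c then ((p == q) && (s' == t')) || adjs p q s' t' else adjs p q s' t')
  | _, _ => false
  end.

Definition node (m k : nat) := (gpt m * (k - 2).-tuple bool)%type.

Definition Gadj (m k : nat) (x y : node m k) : bool := adjs x.1 y.1 x.2 y.2.

Definition inH2 (m k : nat) (x : node m k) : bool := all (fun b => ~~ b) x.2.

Definition kclique (m k : nat) (K : {set node m k}) : Prop :=
  #|K| = k /\ (forall x y, x \in K -> y \in K -> x != y -> Gadj x y).

Definition inball (m k : nat) (U : {set node m k}) (T : nat) (y : node m k) : Prop :=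
  exists (x : node m k) (p : seq (node m k)),
    [/\ x \in U, path (@Gadj m k) x p, last x p = y & size p <= T].

(* Main.v *)
Require Import Defs.
From mathcomp Require Import all_boot.
From mathcomp Require Import zify.
Set Implicit Arguments. Unset Strict Implicit.

Section G.
Variable m : nat.
Definition T n := (gpt m * n.-tuple bool)%type.
Definition adj n : rel (T n) := fun x y => adjs x.1 y.1 x.2 y.2.
Definition old n (x : T n) : T n.+1 := (x.1, [tuple of false :: x.2]).
Definition dup n (x : T n) : T n.+1 := (x.1, [tuple of true :: x.2]).

Lemma adj_oo n (x y : T n) : adj (old x) (old y) = adj x y.
Proof. by []. Qed.
Lemma adj_dd n (x y : T n) : adj (dup x) (dup y) = false.
Proof. by []. Qed.
Lemma adj_do n (x y : T n) : adj (dup x) (old y) = (x == y) || adj x y.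
Proof. by case: x y => [p s] [q t]; rewrite /adj /= xpair_eqE. Qed.
Lemma adj_od n (x y : T n) : adj (old y) (dup x) = (y == x) || adj y x.
Proof. by case: x y => [p s] [q t]; rewrite /adj /= xpair_eqE. Qed.

Lemma oldP n (z : T n.+1) : {x | z = old x} + {x | z = dup x}.
Proof.
by case: z => p s; case/tupleP: s => b s; case: b; [right|left]; exists (p, s).
Qed.

Lemma old_inj n : injective (@old n).
Proof. by move=> [p s] [q t] [-> /val_inj ->]. Qed.
Lemma dup_inj n : injective (@dup n).
Proof. by move=> [p s] [q t] [-> /val_inj ->]. Qed.
Lemma old_dup n (x y : T n) : old x != dup y.
Proof. by apply/negP => /eqP []. Qed.

Lemma gridadj_irr (p : gpt m) : gridadj p p = false.
Proof. by rewrite /gridadj !eqxx /=; apply/negP => /orP [] /orP [] /eqP; lia. Qed.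

Lemma adjs_irr (p : gpt m) s : adjs p p s s = false.
Proof. by elim: s => [|[] s IH] /=; rewrite ?gridadj_irr ?IH. Qed.

Lemma adj_neq n (x y : T n) : adj x y -> x != y.
Proof. by apply: contraTneq => ->; rewrite /adj adjs_irr. Qed.
Definition cl n (K : {set T n}) := forall x y, x \in K -> y \in K -> x != y -> adj x y.

Lemma tup0 (t : 0.-tuple bool) : val t = [::].
Proof. by apply/size0nil; rewrite size_tuple. Qed.

Lemma grid_par (p q : gpt m) : gridadj p q -> odd (p.1 + p.2) != odd (q.1 + q.2).
Proof.
case: p q => [[a ha] [b hb]] [[c hc] [d hd]]; rewrite /gridadj /=.
case/orP => /andP [/eqP -> /orP [] /eqP <-];
  by rewrite ?addnS ?addSn /=; case: odd.
Qed.

Lemma bound n (K : {set T n}) : cl K -> #|K| <= n.+2.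
Proof.
elim: n K => [|n IH] K hK.
  pose f (x : T 0) := odd (x.1.1 + x.1.2).
  rewrite -(card_in_imset (f := f)); first by apply: leq_trans (max_card _) _; rewrite card_bool.
  move=> x y hx hy e; apply/eqP/negPn/negP => nxy.
  have := hK x y hx hy nxy; rewrite /adj !tup0 /= => /grid_par.
  by rewrite /f in e; rewrite e eqxx.
pose L := [set x | old x \in K]; pose D := [set x | dup x \in K].
have hKs : K \subset (@old n) @: L :|: (@dup n) @: D.
  apply/subsetP => z hz; case: (oldP z) => [[x ez]|[x ez]]; subst z; rewrite in_setU.
    by rewrite mem_imset; [rewrite inE hz | exact: old_inj].
  by rewrite orbC mem_imset; [rewrite inE hz | exact: dup_inj].
have hD : #|D| <= 1.
  apply/card_le1_eqP => x y; rewrite !inE => hx hy; apply/eqP/negPn/negP => nxy.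
  suff : adj (dup x) (dup y) by rewrite adj_dd.
  by apply: hK hx hy _; apply: contra nxy => /eqP/dup_inj ->.
have hL : #|L| <= n.+2.
  apply: IH => x y; rewrite !inE => hx hy nxy.
  rewrite -adj_oo; apply: hK hx hy _.
  by apply: contra nxy => /eqP/old_inj ->.
apply: leq_trans (subset_leq_card hKs) _.
rewrite cardsU !card_imset; [|exact: dup_inj|exact: old_inj]. lia.
Qed.
Definition ball n (U : {set T n}) r y := exists x p,
  [/\ x \in U, path (@adj n) x p, last x p = y & size p <= r].
Definition good n (U : {set T n}) (K : {set T n}) :=
  [/\ cl K, #|K| = n.+2 & forall z, z \in K -> ball U n.+1 z].
Definition step n : rel {set T n} := fun A B => n.+1 <= #|A :&: B|.
Definition chainR n (P : {set T n} -> Prop) (st : rel {set T n}) K K' :=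
  exists rest, [/\ path st K rest, last K rest = K' & forall L, L \in K :: rest -> P L].

Lemma chain_refl n (P : {set T n} -> Prop) (st : rel {set T n}) K : P K -> chainR P st K K.
Proof. by move=> hK; exists [::]; split => // L; rewrite inE => /eqP ->. Qed.

Lemma chain_cons n (P : {set T n} -> Prop) (st : rel {set T n}) K K1 K' :
  P K -> st K K1 -> chainR P st K1 K' -> chainR P st K K'.
Proof.
move=> hK hs [r [hp hl hP]]; exists (K1 :: r); split => //=; first by rewrite hs.
by move=> L; rewrite inE => /orP [/eqP ->|]; [|apply: hP].
Qed.

Definition lift n (L : {set T n}) x : {set T n.+1} := dup x |: (@old n) @: L.

Lemma dup_notin n (L : {set T n}) x : dup x \notin (@old n) @: L.
Proof. by apply/imsetP => -[y _ /eqP]; rewrite eq_sym (negbTE (old_dup _ _)). Qed.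

Lemma card_lift n (L : {set T n}) x : #|lift L x| = #|L|.+1.
Proof. by rewrite /lift cardsU1 dup_notin card_imset //; apply: old_inj. Qed.

Lemma lift_cl n (L : {set T n}) x : cl L -> x \in L -> cl (lift L x).
Proof.
move=> hL hx z1 z2; rewrite !inE => /orP [/eqP ->|/imsetP [y1 hy1 ->]] /orP [/eqP ->|/imsetP [y2 hy2 ->]].
- by rewrite eqxx.
- move=> _; rewrite adj_do; case: eqP => //= /eqP; exact: hL.
- move=> _; rewrite adj_od; case: eqP => //= /eqP; exact: hL.
- move=> ne; rewrite adj_oo; apply: hL => //; by apply: contra ne => /eqP ->.
Qed.

Lemma ball_le n (U : {set T n}) r r' y : r <= r' -> ball U r y -> ball U r' y.
Proof. by move=> h [x [p [? ? ? hs]]]; exists x, p; split => //; apply: leq_trans h. Qed.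

Lemma ball_old n (u v : T n) r y : ball [set u; v] r y -> ball [set old u; old v] r (old y).
Proof.
move=> [x [p [hx hp hl hs]]]; exists (old x), (map (@old n) p); split.
- by move: hx; rewrite !inE => /orP [] /eqP ->; rewrite eqxx ?orbT.
- by rewrite path_map.
- by rewrite last_map hl.
- by rewrite size_map.
Qed.

Lemma ball_dup n (u v : T n) r y : ball [set u; v] r y -> ball [set old u; old v] r.+1 (dup y).
Proof.
move=> [x [p [hx hp hl hs]]]; exists (old x), (rcons (map (@old n) p) (dup y)); split.
- by move: hx; rewrite !inE => /orP [] /eqP ->; rewrite eqxx ?orbT.
- by rewrite rcons_path path_map hp last_map hl adj_od eqxx.
- by rewrite last_rcons.
- by rewrite size_rcons size_map.
Qed.

Lemma lift_good n (u v : T n) L x : good [set u; v] L -> x \in L ->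
  good [set old u; old v] (lift L x).
Proof.
move=> [hc hs hb] hx; split; first exact: lift_cl.
  by rewrite card_lift hs.
move=> z; rewrite !inE => /orP [/eqP ->|/imsetP [y hy ->]].
  exact/ball_dup/hb.
by apply: ball_le (ball_old (hb _ hy)).
Qed.

Lemma step_same n (L : {set T n}) a b : #|L| = n.+2 -> step (lift L a) (lift L b).
Proof.
move=> hs; rewrite /step -hs -(card_imset L (@old_inj n)).
by apply: subset_leq_card; rewrite subsetI !subsetUr.
Qed.

Lemma step_move n (L L1 : {set T n}) x : step L L1 -> step (lift L x) (lift L1 x).
Proof.
rewrite /step => h; apply: leq_trans (_ : #|lift (L :&: L1) x| <= _).
  by rewrite card_lift.
apply: subset_leq_card; rewrite subsetI /lift !setUS //.
  exact: imsetS (subsetIr _ _).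
exact: imsetS (subsetIl _ _).
Qed.
Lemma lift_chain n (u v : T n) Ls : forall L a b,
  (forall L0, L0 \in L :: Ls -> good [set u; v] L0) -> path (@step n) L Ls ->
  good [set old u; old v] (lift L a) -> good [set old u; old v] (lift (last L Ls) b) ->
  chainR (good [set old u; old v]) (@step n.+1) (lift L a) (lift (last L Ls) b).
Proof.
elim: Ls => [|L1 Ls IH] L a b hg hp ha hb /=.
  apply: chain_cons ha _ (chain_refl _ hb).
  by apply: step_same; case: (hg L (mem_head _ _)).
move: hp => /= /andP [h1 hp].
have [x hx] : exists x, x \in L :&: L1.
  by apply/set0Pn; rewrite -card_gt0; apply: leq_trans h1.
move: hx; rewrite inE => /andP [hxL hxL1].
have gL := hg L (mem_head _ _).
have gL1 : good [set u; v] L1 by apply: hg; rewrite !inE eqxx orbT.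
apply: (@chain_cons _ _ _ _ (lift L x)) ha _ _.
  by apply: step_same; case: gL.
apply: (@chain_cons _ _ _ _ (lift L1 x)) (lift_good gL hxL) (step_move _ h1) _.
apply: IH => //; first by move=> L0 h0; apply: hg; rewrite inE h0 orbT.
exact: lift_good.
Qed.

Lemma decomp n (K : {set T n.+1}) : cl K -> #|K| = n.+3 ->
  exists L w, [/\ cl L, #|L| = n.+2 & K = lift L w].
Proof.
move=> hK hc.
pose L := [set x | old x \in K]; pose D := [set x | dup x \in K].
have eK : K = (@old n) @: L :|: (@dup n) @: D.
  apply/setP => z; rewrite in_setU; apply/idP/idP.
    case: (oldP z) => [[x ez]|[x ez]] hz; subst z.
      by rewrite mem_imset; [rewrite inE hz | exact: old_inj].
    by rewrite orbC mem_imset; [rewrite inE hz | exact: dup_inj].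
  by case/orP => /imsetP [y]; rewrite inE => hy ->.
have hD : #|D| <= 1.
  apply/card_le1_eqP => x y; rewrite !inE => hx hy; apply/eqP/negPn/negP => nxy.
  suff : adj (dup x) (dup y) by rewrite adj_dd.
  by apply: hK hx hy _; apply: contra nxy => /eqP/dup_inj ->.
have hL : cl L.
  move=> x y; rewrite !inE => hx hy nxy.
  rewrite -adj_oo; apply: hK hx hy _.
  by apply: contra nxy => /eqP/old_inj ->.
have hLb : #|L| <= n.+2 := bound hL.
have : #|K| <= #|L| + #|D|.
  by rewrite eK cardsU !card_imset; [lia|exact: dup_inj|exact: old_inj].
rewrite hc => hle.
have /cards1P [w ew] : #|D| == 1 by apply/eqP; lia.
have hLc : #|L| = n.+2 by lia.
exists L, w; split => //.
by rewrite eK ew imset_set1 setUC.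
Qed.
Definition inH n (x : T n) := all (fun b => ~~ b) x.2.

Lemma H2_old n (z : T n.+1) : inH z -> exists z0, z = old z0 /\ inH z0.
Proof.
case: (oldP z) => [[x ->]|[x ->]] //.
by move=> h; exists x.
Qed.

Lemma gridadj_sym (p q : gpt m) : gridadj p q = gridadj q p.
Proof.
case: p q => [[a ?] [b ?]] [[c ?] [d ?]]; rewrite /gridadj /=.
by rewrite [c == a]eq_sym [d == b]eq_sym [(b.+1 == d) || _]orbC [(a.+1 == c) || _]orbC.
Qed.

Lemma adjs_sym (p q : gpt m) s t : adjs p q s t = adjs q p t s.
Proof.
elim: s t => [|b s IH] [|c t] //=; first exact: gridadj_sym.
by case: b; case: c; rewrite ?IH // [q == _]eq_sym [t == _]eq_sym.
Qed.

Lemma adj_sym n (x y : T n) : adj x y = adj y x.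
Proof. exact: adjs_sym. Qed.

Lemma ball_nb n (U K : {set T n}) u z : u \in U -> u \in K -> cl K -> z \in K -> ball U 1 z.
Proof.
move=> hu huK hK hz; case: (eqVneq u z) => [<-|ne].
  by exists u, [::].
by exists u, [:: z]; split => //=; rewrite hK.
Qed.

Lemma good_of n (U K : {set T n}) u : u \in U -> u \in K -> cl K -> #|K| = n.+2 -> good U K.
Proof.
move=> hu huK hK hc; split => // z hz; apply: ball_le (ball_nb hu huK hK hz) => //.
Qed.

Lemma main_gen n : forall (u v : T n), adj u v -> inH u -> inH v ->
  forall K K', cl K -> #|K| = n.+2 -> cl K' -> #|K'| = n.+2 -> u \in K -> v \in K' ->
  chainR (good [set u; v]) (@step n) K K'.
Proof.
elim: n => [|n IH] u v huv hu hv K K' hK hc hK' hc' huK hvK'.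
  have hu2 : u \in [set u; v] by rewrite !inE eqxx.
  have hv2 : v \in [set u; v] by rewrite !inE eqxx orbT.
  apply: (@chain_cons _ _ _ _ [set u; v]).
  - exact: good_of hu2 huK hK hc.
  - by rewrite /step card_gt0; apply/set0Pn; exists u; rewrite inE huK.
  apply: chain_cons; last first.
  - apply: chain_refl; exact: good_of hv2 hvK' hK' hc'.
  - by rewrite /step card_gt0; apply/set0Pn; exists v; rewrite inE hvK' !inE eqxx orbT.
  - split.
    + move=> x y; rewrite !inE => /orP [] /eqP -> /orP [] /eqP ->; rewrite ?eqxx //.
      by rewrite adj_sym.
    + by rewrite cards2 adj_neq.
    + move=> z; rewrite !inE => /orP [] /eqP ->.
        by exists u, [::].
      by exists v, [::].
have [u0 [eu hu0]] := H2_old hu; have [v0 [ev hv0]] := H2_old hv.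
subst u v; rewrite adj_oo in huv.
have [L [w [hL hLc eK]]] := decomp hK hc.
have [L' [w' [hL' hLc' eK']]] := decomp hK' hc'.
have hu0L : u0 \in L.
  move: huK; rewrite eK !inE (negbTE (old_dup _ _)) /= mem_imset //; exact: old_inj.
have hv0L' : v0 \in L'.
  move: hvK'; rewrite eK' !inE (negbTE (old_dup _ _)) /= mem_imset //; exact: old_inj.
have [Ls [hp hl hg]] := IH u0 v0 huv hu0 hv0 L L' hL hLc hL' hLc' hu0L hv0L'.
have hu2 : old u0 \in [set old u0; old v0] by rewrite !inE eqxx.
have hv2 : old v0 \in [set old u0; old v0] by rewrite !inE eqxx orbT.
have gK := good_of hu2 huK hK hc.
have gK' := good_of hv2 hvK' hK' hc'.
rewrite eK eK' -hl; apply: lift_chain => //.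
  by rewrite -eK.
by rewrite hl -eK'.
Qed.
End G.

Theorem mainTheorem18 (m k : nat) (u v : node m k) (K K' : {set node m k}) :
  2 <= k ->
  Gadj u v -> inH2 u -> inH2 v ->
  kclique K -> kclique K' -> u \in K -> v \in K' ->
  exists Ks : seq {set node m k},
    [/\ head K Ks = K, last K Ks = K', Ks != [::],
        (forall L, L \in Ks -> kclique L /\
                   (forall z, z \in L -> inball [set u; v] (k - 1) z)) &
        path (fun A B => k - 1 <= #|A :&: B|) K (behead Ks)].
Proof.
move=> hk huv hu hv [hc hK] [hc' hK'] huK hvK'.
have e1 : k - 1 = (k - 2).+1 by lia.
have [rest [hp hl hP]] := @main_gen m (k - 2) u v huv hu hv K K' hK
   ltac:(rewrite hc; lia) hK' ltac:(rewrite hc'; lia) huK hvK'.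
exists (K :: rest); split => //.
  move=> L hL; have [hcl hcard hb] := hP L hL; split.
    by split => //; rewrite hcard; lia.
  by move=> z hz; rewrite e1; exact: hb.
by rewrite e1.
Qed.
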